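(* In the setting below, for $n$ participants, the protocol consisting of the setup phase, the merged round and the recovery round is correct, i.e. at the end every participant's balance is $0$ (and the shared address is empty), and, apart from the setup, it uses exactly $2\cdot n+1$ transactions.
   Context: Setting (Conspiracy Santa). There are $n$ participants $P_1,\dots,P_n$. For each participant, the other $n-1$ participants form a group, choose a gift for him, one or more of them buy it, and its value is shared equally among the group members (more generally, expenses are shared within exchange groups). All participants know a fixed integer upper bound $B>0$ (in cents) on the value of any gift. Setup phase: payments in each group are broadcast within the group; each member computes the in-group share (group total divided by group size); each participant sums his in-group shares and subtracts his own expenses, obtaining his balance $p_i$, an integer number of cents (shares may be unevenly split up to one cent). Thus $\sum_i p_i=0$; $p_i>0$ means $P_i$ owes money, $p_i<0$ means $P_i$ is owed money. Sending $x$ cents decreases the sender's balance by $x$ and increases the receiver's by $x$. Participants create anonymous cryptocurrency addresses and one shared anonymous address (piggy bank) whose key all know. $x\bmod B\in\{0,\dots,B-1\}$. Merged round (private transactions on secure channels, except the last): $P_1$ samples $t_1$ uniformly in $\{0,\dots,B-1\}$, sets $p_1\leftarrow p_1-1-t_1$, sends $1+t_1$ cents to $P_2$, who adds it to $p_2$. For $i=2,\dots,n$: $P_i$ sets $t_i=(p_i-1)\bmod B$, sets $p_i\leftarrow p_i-1-t_i-(i-1)B$ and sends $1+t_i+(i-1)B$ cents to $P_{i+1}$ (where $P_{n+1}=P_1$), who adds it to his balance. Finally $P_1$ sends $nB$ cents to the shared address (a public transaction), updating his balance accordingly. Recovery round: every $P_i$ with $p_i<0$ makes, $-p_i/B$ times,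 the shared address pay $B$ cents to one of his own (distinct) anonymous addresses, then sets $p_i\leftarrow 0$.
   Formalization: The balances $p_i$ after the setup phase also satisfy $p_i \le B$ for every participant, so nobody owes more than the gift bound B. The statement above fails without it. *)

(* Defs.v *)
(* integers (cents) are Z, participants are 0..n-1
   (index i corresponds to P_(i+1) in the paper). *)
From Stdlib Require Import ZArith List.
Import ListNotations.
Open Scope Z_scope.

Inductive tx : Type :=
| Priv (snd rcv : nat) (x : Z)
| ToShared (snd : nat) (x : Z)
| FromShared (rcv : nat) (x : Z) (* shared address pays x cents to an anonymous address of rcv *).

Record state : Type := mkState {
  bal : nat -> Z;
  shared : Z;
  log : list tx
}.

Definition exec (t : tx) (s : state) : state :=
  match t with
  | Priv a b x =>
      mkState (fun j => bal s j - (if Nat.eqb j a then x else 0)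
                                + (if Nat.eqb j b then x else 0))
              (shared s) (log s ++ [t])
  | ToShared a x =>
      mkState (fun j => bal s j - (if Nat.eqb j a then x else 0))
              (shared s + x) (log s ++ [t])
  | FromShared b x =>
      mkState (fun j => bal s j + (if Nat.eqb j b then x else 0))
              (shared s - x) (log s ++ [t])
  end.

Definition next (n i : nat) : nat := if Nat.eqb (S i) n then 0%nat else S i.

Definition merged_step (n : nat) (B : Z) (s : state) (i : nat) : state :=
  let t := (bal s i - 1) mod B in
  exec (Priv i (next n i) (1 + t + Z.of_nat i * B)) s.

(* Merged round, given P_1's random sample t1. *)
Definition merged_round (n : nat) (B t1 : Z) (s : state) : state :=
  let s1 := exec (Priv 0 (next n 0) (1 + t1)) s in
  let s2 := fold_left (merged_step n B) (seq 1 (n - 1)) s1 in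
  exec (ToShared 0 (Z.of_nat n * B)) s2.

Definition recovery_step (B : Z) (s : state) (i : nat) : state :=
  if bal s i <? 0
  then Nat.iter (Z.to_nat (- bal s i / B)) (exec (FromShared i B)) s
  else s.

Definition recovery_round (n : nat) (B : Z) (s : state) : state :=
  fold_left (recovery_step B) (seq 0 n) s.

Definition initial (p : nat -> Z) : state := mkState p 0 [].

Definition protocol (n : nat) (B t1 : Z) (p : nat -> Z) : state :=
  recovery_round n B (merged_round n B t1 (initial p)).

Definition setup_balances (n : nat) (B : Z) (p : nat -> Z) : Prop :=
  fold_right Z.add 0 (map p (seq 0 n)) = 0 /\
  (forall i, (i < n)%nat -> p i <= B).

(* Main.v *)
Require Import Defs.
From Stdlib Require Import ZArith List Lia.
Import ListNotations.
Open Scope Z_scope.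

Definition sumZ (f : nat -> Z) (l : list nat) := fold_right Z.add 0 (map f l).

Lemma sumZ_cons f a l : sumZ f (a :: l) = f a + sumZ f l.
Proof. reflexivity. Qed.

Lemma sumZ_lin f g h l : sumZ (fun j => f j - g j + h j) l = sumZ f l - sumZ g l + sumZ h l.
Proof. induction l; simpl; [reflexivity|]. unfold sumZ in *; simpl; lia. Qed.

Lemma sumZ_sub f g l : sumZ (fun j => f j - g j) l = sumZ f l - sumZ g l.
Proof. induction l; simpl; [reflexivity|]. unfold sumZ in *; simpl; lia. Qed.

Lemma sumZ_ext f g l : (forall j, In j l -> f j = g j) -> sumZ f l = sumZ g l.
Proof.
  induction l; intros H; [reflexivity|]. rewrite !sumZ_cons.
  rewrite H by (left; auto). rewrite IHl; auto. intros; apply H; right; auto.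
Qed.

Ltac bdes := repeat match goal with
  | |- context[Nat.leb ?x ?y] => destruct (Nat.leb_spec x y)
  | |- context[Nat.ltb ?x ?y] => destruct (Nat.ltb_spec x y)
  | |- context[Nat.eqb ?x ?y] => destruct (Nat.eqb_spec x y)
  end; simpl in *.

Lemma sum_delta a x c : forall st,
  sumZ (fun j => if Nat.eqb j a then x else 0) (seq st c)
  = if andb (Nat.leb st a) (Nat.ltb a (st + c)) then x else 0.
Proof.
  induction c; intros st; simpl.
  - bdes; unfold sumZ; simpl; lia.
  - rewrite sumZ_cons, IHc. bdes; lia.
Qed.

Lemma sumZ_div B f l : (forall j, In j l -> (B | f j)) -> (B | sumZ f l).
Proof.
  induction l; intros H. - exists 0; reflexivity.
  - rewrite sumZ_cons. apply Z.divide_add_r. apply H; left; auto.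
    apply IHl; intros; apply H; right; auto.
Qed.

Definition tot n s := sumZ (bal s) (seq 0 n) + shared s.

Lemma tot_priv n s a b x : (a < n)%nat -> (b < n)%nat ->
  tot n (exec (Priv a b x) s) = tot n s.
Proof.
  intros Ha Hb. unfold tot; simpl. rewrite sumZ_lin, !sum_delta.
  destruct (Nat.leb_spec 0 a), (Nat.ltb_spec a (0+n)), (Nat.leb_spec 0 b), (Nat.ltb_spec b (0+n));
   simpl; lia.
Qed.

Lemma tot_shared n s a x : (a < n)%nat -> tot n (exec (ToShared a x) s) = tot n s.
Proof.
  intros Ha. unfold tot; simpl. rewrite sumZ_sub, !sum_delta.
  destruct (Nat.leb_spec 0 a), (Nat.ltb_spec a (0+n)); simpl; lia.
Qed.

Lemma next_lt n i : (S i < n)%nat -> next n i = S i.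
Proof. intros. unfold next. destruct (Nat.eqb_spec (S i) n); lia. Qed.

Lemma next_last n i : S i = n -> next n i = 0%nat.
Proof. intros. unfold next. destruct (Nat.eqb_spec (S i) n); lia. Qed.

Lemma step_calc B pi t (k : nat) : 0 < B -> pi <= B -> 0 <= t < B ->
  let v := pi + 1 + t + Z.of_nat k * B in
  v - (1 + ((v - 1) mod B) + Z.of_nat (S k) * B) <= 0 /\
  (B | v - (1 + ((v - 1) mod B) + Z.of_nat (S k) * B)).
Proof.
  intros HB Hp Ht v.
  pose proof (Z.div_mod (v - 1) B ltac:(lia)).
  pose proof (Z.mod_pos_bound (v - 1) B HB).
  assert ((v - 1) / B < Z.of_nat k + 2).
  { apply Z.div_lt_upper_bound; [lia|]. unfold v. nia. }
  rewrite Nat2Z.inj_succ. split; [nia|].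
  exists ((v-1)/B - Z.of_nat k - 1). lia.
Qed.

Definition s1 (B t1 : Z) (p : nat -> Z) := exec (Priv 0 1 (1 + t1)) (initial p).

Lemma merged_inv n B t1 p (Hn : (2 <= n)%nat) (HB : 0 < B)
  (Hp : forall i, (i < n)%nat -> p i <= B) (Ht : 0 <= t1 < B) (Hsum : tot n (initial p) = 0) :
  forall k, (S k <= n - 1)%nat ->
  let s := fold_left (merged_step n B) (seq 1 k) (s1 B t1 p) in
  (exists t, 0 <= t < B /\ bal s (S k) = p (S k) + 1 + t + Z.of_nat k * B) /\
  bal s 0 = p 0%nat - 1 - t1 /\
  (forall j, (1 <= j <= k)%nat -> bal s j <= 0 /\ (B | bal s j)) /\
  (forall j, (S (S k) <= j)%nat -> bal s j = p j) /\
  shared s = 0 /\ length (log s) = S k /\ tot n s = 0.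
Proof.
  induction k; intros Hk s.
  - assert (Hg : tot n (s1 B t1 p) = 0) by (unfold s1; rewrite tot_priv by lia; exact Hsum).
    subst s; simpl fold_left; revert Hg; unfold s1; remember (1 + t1) as y eqn:Ey; simpl; intros Hg. split; [exists t1; split; [lia|]; simpl; lia|].
    split; [simpl; lia|]. split; [intros; lia|].
    split; [intros j Hj; destruct j as [|[|j]]; simpl; lia|].
    split; [reflexivity|]. split; [reflexivity|].
    exact Hg.
  - destruct (IHk ltac:(lia)) as [[t [Ht' HA]] [HB0 [HC [HD [HE [HF HG]]]]]].
    subst s. rewrite seq_S, fold_left_app. cbn [fold_left Nat.add].
    set (s := fold_left (merged_step n B) (seq 1 k) (s1 B t1 p)) in *.
    unfold merged_step. rewrite next_lt by lia.
    set (x := 1 + (bal s (S k) - 1) mod B + Z.of_nat (S k) * B).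
    assert (Hc := step_calc B (p (S k)) t k HB ltac:(apply Hp; lia) Ht').
    cbn [Nat.add] in Hc. rewrite <- HA in Hc. fold x in Hc.
    split.
    { exists ((bal s (S k) - 1) mod B). split; [apply Z.mod_pos_bound; lia|].
      cbn [exec bal shared log]. rewrite HD by lia.
      destruct (Nat.eqb_spec (S (S k)) (S k)); [lia|].
      destruct (Nat.eqb_spec (S (S k)) (S (S k))); [|lia]. unfold x. lia. }
    split; [cbn [exec bal shared log]; rewrite HB0; cbn [Nat.eqb]; lia|].
    split.
    { intros j Hj. cbn [exec bal shared log]. destruct (Nat.eqb_spec j (S k)).
      - subst j. destruct (Nat.eqb_spec (S k) (S (S k))); [lia|]. rewrite Z.add_0_r. exact Hc.
      - destruct (Nat.eqb_spec j (S (S k))); [lia|]. rewrite Z.sub_0_r, Z.add_0_r. apply HC; lia. }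
    split.
    { intros j Hj. cbn [exec bal shared log]. destruct (Nat.eqb_spec j (S k)); [lia|].
      destruct (Nat.eqb_spec j (S (S k))); [lia|]. rewrite HD by lia. lia. }
    split; [cbn [exec bal shared log]; exact HE|].
    split; [cbn [exec bal shared log]; rewrite length_app, HF; cbn [length]; lia|].
    rewrite tot_priv by lia. exact HG.
Qed.

Lemma iter_from B i k s :
  (forall j, bal (Nat.iter k (exec (FromShared i B)) s) j
             = bal s j + (if Nat.eqb j i then Z.of_nat k * B else 0)) /\
  shared (Nat.iter k (exec (FromShared i B)) s) = shared s - Z.of_nat k * B /\
  length (log (Nat.iter k (exec (FromShared i B)) s)) = (length (log s) + k)%nat.
Proof.
  induction k.
  - simpl. split; [intros j; destruct (j =? i)%nat; lia|]. split; [lia|lia].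
  - rewrite Nat.iter_succ; cbn [exec bal shared log]; rewrite Nat2Z.inj_succ.
    destruct IHk as [H1 [H2 H3]]. split; [|split].
    + intros j. rewrite H1. destruct (j =? i)%nat; lia.
    + rewrite H2; lia.
    + rewrite length_app, H3; cbn [length]; lia.
Qed.

Lemma rec_step B s i : 0 < B -> bal s i <= 0 -> (B | bal s i) ->
  (forall j, bal (recovery_step B s i) j = if Nat.eqb j i then 0 else bal s j) /\
  shared (recovery_step B s i) = shared s + bal s i /\
  Z.of_nat (length (log (recovery_step B s i))) * B = Z.of_nat (length (log s)) * B - bal s i.
Proof.
  intros HB Hle [q Hq]. unfold recovery_step.
  destruct (Z.ltb_spec (bal s i) 0).
  - rewrite Hq. replace (- (q * B) / B) with (-q)
      by (rewrite <- Z.mul_opp_l, Z.div_mul; lia).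
    destruct (iter_from B i (Z.to_nat (-q)) s) as [H1 [H2 H3]].
    rewrite Z2Nat.id in * by nia.
    split; [|split].
    + intros j. rewrite H1. destruct (Nat.eqb_spec j i); [subst; lia|lia].
    + rewrite H2; lia.
    + rewrite H3, Nat2Z.inj_add, Z2Nat.id by nia. lia.
  - split; [|split]; [|lia|lia].
    intros j. destruct (Nat.eqb_spec j i); [subst; lia|lia].
Qed.

Lemma rec_fold B (HB : 0 < B) : forall c a s,
  (forall j, (a <= j < a + c)%nat -> bal s j <= 0 /\ (B | bal s j)) ->
  let r := fold_left (recovery_step B) (seq a c) s in
  (forall j, bal r j = if andb (Nat.leb a j) (Nat.ltb j (a + c)) then 0 else bal s j) /\
  shared r = shared s + sumZ (bal s) (seq a c) /\
  Z.of_nat (length (log r)) * B = Z.of_nat (length (log s)) * B - sumZ (bal s) (seq a c).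
Proof.
  induction c; intros a s H r; subst r; simpl.
  - split; [intros j; destruct (Nat.leb_spec a j), (Nat.ltb_spec j (a+0)); simpl; lia|].
    unfold sumZ; simpl; lia.
  - destruct (H a ltac:(lia)) as [H1 H2].
    destruct (rec_step B s a HB H1 H2) as [E1 [E2 E3]].
    destruct (IHc (S a) (recovery_step B s a)) as [F1 [F2 F3]].
    { intros j Hj. rewrite E1. destruct (Nat.eqb_spec j a); [lia|]. apply H; lia. }
    assert (Hs : sumZ (bal (recovery_step B s a)) (seq (S a) c) = sumZ (bal s) (seq (S a) c)).
    { apply sumZ_ext. intros j Hj. apply in_seq in Hj. rewrite E1.
      destruct (Nat.eqb_spec j a); lia. }
    rewrite Hs in F2, F3. rewrite sumZ_cons.
    split; [|split].
    + intros j. rewrite F1, E1.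
      destruct (Nat.eqb_spec j a), (Nat.leb_spec (S a) j), (Nat.ltb_spec j (S a + c)),
        (Nat.leb_spec a j), (Nat.ltb_spec j (a + S c)); simpl; lia.
    + rewrite F2, E2; lia.
    + rewrite F3, E3; lia.
Qed.

Theorem theorem4 (n : nat) (B t1 : Z) (p : nat -> Z) :
  (2 <= n)%nat -> 0 < B ->
  setup_balances n B p ->
  0 <= t1 < B ->
  (forall i, (i < n)%nat -> bal (protocol n B t1 p) i = 0) /\
  shared (protocol n B t1 p) = 0 /\
  length (log (protocol n B t1 p)) = (2 * n + 1)%nat.
Proof.
  intros Hn HB [Hsum Hp] Ht.
  assert (Htot : tot n (initial p) = 0) by (unfold tot, sumZ; simpl; lia).
  destruct (merged_inv n B t1 p Hn HB Hp Ht Htot (n - 2) ltac:(lia))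
    as [[t [Ht' HA]] [HB0 [HC [HD [HE [HF HG]]]]]].
  set (s := fold_left (merged_step n B) (seq 1 (n - 2)) (s1 B t1 p)) in *.
  set (m := merged_round n B t1 (initial p)).
  assert (Hm : m = exec (ToShared 0 (Z.of_nat n * B)) (merged_step n B s (S (n - 2)))).
  { unfold m, merged_round, s. cbv zeta. rewrite (next_lt n 0) by lia.
    replace (n - 1)%nat with (S (n - 2)) by lia. rewrite seq_S, fold_left_app.
    reflexivity. }
  assert (Hc := step_calc B (p (S (n-2))) t (n-2) HB ltac:(apply Hp; lia) Ht').
  cbv zeta in Hc. rewrite <- HA in Hc.
  unfold merged_step in Hm. rewrite (next_last n (S (n-2))) in Hm by lia.
  set (x := 1 + (bal s (S (n - 2)) - 1) mod B + Z.of_nat (S (n - 2)) * B) in *.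
  assert (Mbal : forall j, (1 <= j < n)%nat -> bal m j <= 0 /\ (B | bal m j)).
  { intros j Hj. rewrite Hm; simpl.
    destruct (Nat.eqb_spec j 0); [lia|]. destruct (Nat.eqb_spec j (S (n-2))).
    - subst j. rewrite !Z.sub_0_r, Z.add_0_r. exact Hc.
    - rewrite !Z.sub_0_r, Z.add_0_r. apply HC; lia. }
  assert (Mtot : tot n m = 0).
  { rewrite Hm, tot_shared, tot_priv by lia. exact HG. }
  assert (Mshared : shared m = Z.of_nat n * B) by (rewrite Hm; simpl; lia).
  assert (Mlen : length (log m) = S n).
  { rewrite Hm; simpl. rewrite !length_app, HF; simpl; lia. }
  assert (M0 : bal m 0 <= 0 /\ (B | bal m 0)).
  { assert (E : bal m 0%nat = - Z.of_nat n * B - sumZ (bal m) (seq 1 (n - 1))).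
    { unfold tot in Mtot. replace n with (S (n - 1)) in Mtot at 1 by lia.
      cbn [seq] in Mtot. rewrite sumZ_cons in Mtot. lia. }
    assert (D : (B | bal m 0%nat)).
    { rewrite E. apply Z.divide_sub_r.
      - exists (- Z.of_nat n). lia.
      - apply sumZ_div. intros j Hj. apply in_seq in Hj. apply Mbal; lia. }
    split; [|exact D].
    assert (bal m 0%nat < B).
    { rewrite Hm; simpl. destruct (Nat.eqb_spec 0 (S (n-2))); [lia|]. simpl.
      rewrite HB0. pose proof (Z.mod_pos_bound (bal s (S (n - 2)) - 1) B HB).
      pose proof (Hp 0%nat ltac:(lia)). unfold x. rewrite Nat2Z.inj_succ.
      replace (Z.of_nat n) with (Z.of_nat (n-2) + 2) by lia. nia. }
    destruct D as [q Hq]. clear -Hq H HB. rewrite Hq in *. assert (q < 1) by nia. nia. }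
  assert (Hall : forall j, (0 <= j < 0 + n)%nat -> bal m j <= 0 /\ (B | bal m j)).
  { intros j Hj. destruct j; [exact M0|]. apply Mbal; lia. }
  destruct (rec_fold B HB n 0 m Hall) as [R1 [R2 R3]].
  unfold protocol, recovery_round. fold m.
  assert (Hsm : sumZ (bal m) (seq 0 n) = - Z.of_nat n * B) by (unfold tot in Mtot; lia).
  split; [|split].
  - intros i Hi. rewrite R1. destruct (Nat.leb_spec 0 i), (Nat.ltb_spec i (0 + n)); simpl; lia.
  - rewrite R2, Hsm, Mshared; lia.
  - rewrite Hsm, Mlen in R3. apply Nat2Z.inj.
    apply (Z.mul_cancel_r _ _ B); [lia|]. rewrite R3. lia.
Qed.
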